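(* Let $mG$ be a finite $|N|$-player canonical misinformation game on $|S|$ strategies. Then the Stable Set $\mathcal{AD}^\infty(\{mG\})$ is finite.
   Context: A normal-form game is $G=\langle N,S,P\rangle$ with finite players $N$, finite pure strategy sets $S_i$, positions $S=\times_i S_i$, payoffs $P_i:S\to\mathbb{R}$. A misinformation game $mG=\langle G^0,G^1,\dots,G^{|N|}\rangle$ consists of the actual game $G^0$ and subjective games $G^i$; it is canonical if all $G^i=\langle N,S,P^i\rangle$ differ from $G^0$ only in payoffs and in every $G^i$ all players have equally many pure strategies. $NME(mG)$ is the set of profiles $\sigma=(\sigma_1,\dots,\sigma_{|N|})$ such that each $\sigma_i$ is player $i$'s component of some Nash equilibrium of $G^i$. $\chi(\sigma)=\mathrm{supp}(\sigma_1)\times\dots\times\mathrm{supp}(\sigma_{|N|})$. For $\vec v\in S$, $mG_{\vec v}$ is obtained by replacing, in every $P^i$ ($i\ge1$), the payoff vector at position $\vec v$ by $P^0(\vec v)$. For a set $M$ of misinformation games, $\mathcal{AD}(M)=\{mG_{\vec u}: mG\in M,\sigma\in NME(mG),\vec u\in\chi(\sigma)\}$, $\mathcal{AD}^{(0)}(M)=M$, $\mathcal{AD}^{(t+1)}(M)=\mathcal{AD}^{(t)}(\mathcal{AD}(M))$. The length $\mathfrak{L}$ is the least $t\ge0$ with $\mathcal{AD}^{(t+1)}(M)=\mathcal{AD}^{(t)}(M)$, and the Stable Set is $\mathcal{AD}^\infty(M)=\mathcal{AD}^{(\mathfrak{L})}(M)$. *)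

(* Defs.v *)
From mathcomp Require Import all_boot all_order all_algebra.
From mathcomp Require Import boolp classical_sets cardinality reals.
Set Implicit Arguments. Unset Strict Implicit. Unset Printing Implicit Defensive.
Import Order.TTheory GRing.Theory Num.Theory.
Local Open Scope ring_scope.
Local Open Scope classical_set_scope.

Section MisGames.
Variables (R : realType) (n m : nat).
(* players are 'I_n; canonical: every player has the same m pure strategies 'I_m *)
Definition position := {ffun 'I_n -> 'I_m}.
Definition payoff := position -> 'I_n -> R.

Record mgame := MGame { actual : payoff ; subj : 'I_n -> payoff }.

Definition mixed_strategy (x : 'I_m -> R) : Prop :=
  (forall k, 0 <= x k) /\ \sum_(k < m) x k = 1.

Definition profile := 'I_n -> 'I_m -> R.

Definition mixed_profile (s : profile) : Prop := forall i, mixed_strategy (s i).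

Definition exp_payoff (P : payoff) (s : profile) (i : 'I_n) : R :=
  \sum_(v : position) (\prod_(j < n) s j (v j)) * P v i.

Definition deviate (s : profile) (i : 'I_n) (x : 'I_m -> R) : profile :=
  fun j => if j == i then x else s j.

Definition nash (P : payoff) (s : profile) : Prop :=
  mixed_profile s /\
  forall i x, mixed_strategy x -> exp_payoff P (deviate s i x) i <= exp_payoff P s i.

Definition NME (g : mgame) : set profile :=
  [set s | forall i, exists t, nash (subj g i) t /\ s i = t i].

Definition chi (s : profile) : set position :=
  [set v | forall i, 0 < s i (v i)].

Definition update (g : mgame) (v : position) : mgame :=
  MGame (actual g) (fun i w => if w == v then actual g v else subj g i w).

Definition AD (M : set mgame) : set mgame :=
  [set h | exists g, M g /\ exists s, NME g s /\ exists u, chi s u /\ h = update g u].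

Fixpoint ADiter (t : nat) (M : set mgame) : set mgame :=
  match t with
  | 0 => M
  | t'.+1 => ADiter t' (AD M)
  end.

Definition is_length (M : set mgame) (L : nat) : Prop :=
  ADiter L.+1 M = ADiter L M /\ forall t, ADiter t.+1 M = ADiter t M -> (L <= t)%N.

End MisGames.

(* Main.v *)
Require Import Defs.
From mathcomp Require Import all_boot all_order all_algebra.
From mathcomp Require Import boolp classical_sets cardinality reals.

Set Implicit Arguments. Unset Strict Implicit. Unset Printing Implicit Defensive.
Local Open Scope classical_set_scope.

Section Proofs.
Variables (R : realType) (n m : nat).
Local Notation G := (mgame R n m).
Local Notation pos := (position n m).

Definition step (g h : G) : Prop :=
  exists s, NME g s /\ exists u, chi s u /\ h = update g u.

Fixpoint reach (t : nat) (g h : G) : Prop :=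
  match t with
  | 0 => h = g
  | t'.+1 => exists g', step g g' /\ reach t' g' h
  end.

Lemma ADiterE t (M : set G) h :
  ADiter t M h <-> exists g, M g /\ reach t g h.
Proof.
elim: t M h => [|t IH] M h /=.
  by split=> [Mh|[g [Mg ->]]] //; exists h.
rewrite IH; split.
  move=> [x [[g [Mg [s [Ns [u [cu ->]]]]]] rx]].
  exists g; split=> //; exists (update g u); split=> //.
  by exists s; split=> //; exists u.
move=> [g [Mg [x [[s [Ns [u [cu ->]]]] rx]]]].
exists (update g u); split=> //.
by exists g; split=> //; exists s; split=> //; exists u.
Qed.

Definition dis (g : G) : {set pos} :=
  [set v | [exists i, [exists j, subj g i v j != actual g v j]]].

Definition d (g : G) : nat := #|dis g|.

Lemma step_dec g h : step g h -> h = g \/ (d h < d g)%N.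
Proof.
move=> [s [_ [u [_ ->]]]].
case: (boolP (u \in dis g)) => ug; [right|left].
  apply: proper_card; apply/properP; split.
    apply/fintype.subsetP => v; rewrite !inE /=.
    case: (v =P u) => [->|_] //.
    by move=> /existsP [i /existsP [j]]; rewrite eqxx.
  exists u => //; rewrite !inE /= eqxx.
  by apply/negP => /existsP [i /existsP [j]]; rewrite eqxx.
rewrite /update; case: g ug => a sb /= ug; congr MGame.
apply/funext => i; apply/funext => w.
case: (w =P u) => [->|] //.
apply/funext => j; move: ug; rewrite inE negb_exists => /forallP /(_ i).
by rewrite negb_exists => /forallP /(_ j); rewrite negbK => /eqP.
Qed.

Lemma claimA t g h : (d g < t)%N -> reach t.+1 g h -> reach t g h.
Proof.
elim: t g h => [|t IH] g h // dgt [g' [sg rg]].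
case: (step_dec sg) => [E|lt]; first by rewrite E in rg.
exists g'; split=> //; apply: IH => //.
by apply: leq_trans lt _.
Qed.

Lemma claimB t g h : (d g < t)%N -> reach t g h -> reach t.+1 g h.
Proof.
elim: t g h => [|t IH] g h // dgt [g' [sg rg]].
case: (step_dec sg) => [E|lt].
  by exists g; split; [rewrite -{2}E|exists g'; split].
exists g'; split=> //; apply: IH => //.
by apply: leq_trans lt _.
Qed.

Definition upd_set (g : G) (U : {set pos}) : G :=
  MGame (actual g) (fun i w => if w \in U then actual g w else subj g i w).

Lemma reach_upd t g h : reach t g h -> exists U, h = upd_set g U.
Proof.
elim: t g h => [|t IH] g h /=.
  move=> ->; exists (finset (fun _ : pos => false)); case: g => a sb; rewrite /upd_set /=; congr MGame.
  by apply/funext => i; apply/funext => w; rewrite inE.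
move=> [g' [[s [_ [u [_ ->]]]] /IH [U ->]]].
exists (u |: U); rewrite /upd_set /update /=; congr MGame.
apply/funext => i; apply/funext => w; rewrite !inE.
by case: (w \in U); case: (w =P u) => [->|].
Qed.

End Proofs.

Theorem corollary1 (R : realType) (n m : nat) (g : mgame R n m) :
  exists L : nat, is_length [set g]%classic L /\ finite_set (ADiter L [set g]%classic).
Proof.
set M := [set g].
have stab : forall t, (d g < t)%N -> ADiter t.+1 M = ADiter t M.
  move=> t dt; apply/funext => h; apply/propext; rewrite !ADiterE; split.
    move=> [x [Mx rx]]; exists x; split=> //; apply: claimA => //.
    by rewrite Mx.
  move=> [x [Mx rx]]; exists x; split=> //; apply: claimB => //.
  by rewrite Mx.
have ex : exists t, `[< ADiter t.+1 M = ADiter t M >].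
  by exists (d g).+1; apply/asboolP; apply: stab.
case: (ex_minnP ex) => L /asboolP HL Lmin.
exists L; split.
  split=> // t Ht; apply: Lmin; exact/asboolP.
apply: (@sub_finite_set _ _ ((upd_set g) @` [set: {set position n m}])).
  move=> h /ADiterE [x [Mx rx]]; rewrite /M /= in Mx; subst x.
  by case: (reach_upd rx) => U ->; exists U.
by apply: finite_image; apply: finite_finset.
Qed.
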